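(* Let $X$ be an Alexandroff space and $Y$ a topological space. Let $\alpha$ be the cardinality of the set of connected components of $X$ (equivalently of $X/\Re_X$) and $\beta$ the cardinality of the set of closed points of $Y$. Then $$\mathrm{card}\{f\in Y^X : f \text{ has closed graph}\}=\beta^\alpha\le \mathrm{card}(\mathcal{C}(X,Y)),$$ where $\beta^\alpha$ denotes cardinal exponentiation.
   Context: For a map $f:X\to Y$ its graph is $G_f=\{(x,f(x)):x\in X\}$; $f$ has closed graph if $G_f$ is closed in $X\times Y$ (product topology). A point $y\in Y$ is closed if $\{y\}$ is a closed set. $Y^X$ is the set of all maps $X\to Y$ and $\mathcal{C}(X,Y)$ is the set of continuous maps $X\to Y$. A topological space $X$ is an Alexandroff space if the intersection of every nonempty family of open subsets of $X$ is open; equivalently, every point $a\in X$ has a smallest open neighbourhood, denoted $V_a$. On an Alexandroff space $X$, $\Re_X$ is the equivalence relation: $(x,y)\in\Re_X$ iff there exist $x=x_1,\ldots,x_n=y$ in $X$ with $V_{x_i}\cap V_{x_{i+1}}\neq\emptyset$ for all $i$. *)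

(* Defs.v *)
From HB Require Import structures.
From mathcomp Require Import all_boot all_order all_algebra.
From mathcomp Require Import all_classical all_reals all_analysis.
Unset Printing Implicit Defensive.
Local Open Scope classical_set_scope.

Definition alexandroff (X : topologicalType) : Prop :=
  forall F : set (set X), F !=set0 -> (forall U, F U -> open U) ->
    open (\bigcap_(U in F) U).

Definition conn_components (X : topologicalType) : set (set X) :=
  [set connected_component setT x | x in [set: X]].

Definition closed_points (Y : topologicalType) : set Y :=
  [set y : Y | closed [set y]].

Definition graph {X Y : Type} (f : X -> Y) : set (X * Y) :=
  [set p | p.2 = f p.1].

Definition closed_graph {X Y : topologicalType} (f : X -> Y) : Prop :=
  closed (graph f).

(* beta^alpha: the set of all maps from the components of X to the closed points of Y. *)
Definition comp_to_closed_pts (X Y : topologicalType) :=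
  [set: set_type (conn_components X) -> set_type (closed_points Y)].

(* Main.v *)
Require Import Defs.
From HB Require Import structures.
From mathcomp Require Import all_boot all_order all_algebra.
From mathcomp Require Import all_classical all_reals all_analysis.
Local Open Scope classical_set_scope.
Local Open Scope card_scope.

Section Aux.
Context (X Y : topologicalType) (alex : alexandroff X).

Definition VV (x : X) : set X := \bigcap_(U in [set U : set X | open U /\ U x]) U.

Lemma VV_open x : open (VV x).
Proof.
apply: alex; first by exists setT; split => //; exact: openT.
by move=> U [].
Qed.

Lemma VV_refl x : VV x x.
Proof. by move=> U []. Qed.

Lemma VV_nbhs x : nbhs x (VV x).
Proof. by apply: open_nbhs_nbhs; split; [exact: VV_open|exact: VV_refl]. Qed.

Lemma VV_sub x B : nbhs x B -> VV x `<=` B.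
Proof.
rewrite nbhsE => -[C [oC Cx] CB] z Vz; apply: CB; exact: Vz.
Qed.

Lemma open_VV (A : set X) : (forall z, A z -> VV z `<=` A) -> open A.
Proof.
move=> H; rewrite openE => z Az.
exact: (filterS (H z Az) (VV_nbhs z)).
Qed.

Lemma VV_comp x z : VV x z ->
  connected_component setT x = connected_component setT z.
Proof.
move=> Vz.
have cl : closure [set z] x.
  by move=> B /VV_sub nB; exists z; split => //; apply: nB.
have : closure [set z] `<=` connected_component setT z.
  apply: connected_component_max => //.
  - exact: subset_closure.
  - by apply: connected_closure; exact: connected1.
move=> /(_ x cl) zx.
by rewrite (same_connected_component zx).
Qed.

Definition PP (f : X -> Y) :=
  (forall x, closed [set f x]) /\
  (forall x z, connected_component setT x z -> f z = f x).

Lemma cg_PP f : closed_graph f <-> PP f.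
Proof.
split.
- move=> cg.
  have Vc : forall x z, VV x z -> f z = f x.
    move=> x z Vz.
    have : closure (graph f) (x, f z).
      move=> B [[P Q] /= [nP nQ] PQB].
      exists (z, f z); split => //; apply: PQB; split => /=.
        exact: VV_sub nP _ Vz.
      exact: nbhs_singleton.
    by move=> /cg.
  split.
  + move=> x y cly.
    have : closure (graph f) (x, y).
      move=> B [[P Q] /= [nP nQ] PQB].
      have [w [-> Qw]] := cly Q nQ.
      exists (x, f x); split => //; apply: PQB; split => //=.
      exact: nbhs_singleton.
    by move=> /cg.
  + move=> x z xz.
    pose A := [set w | f w = f x].
    have oA : open A.
      apply: open_VV => w Aw u Vu; change (f u = f x).
      by rewrite (Vc _ _ Vu); exact: Aw.
    have cA : closed A.
      rewrite -openC; apply: open_VV => w Aw u Vu; change (f u <> f x).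
      by rewrite (Vc _ _ Vu); exact: Aw.
    have := @component_connected _ setT x (connected_component setT x `&` A).
    move=> /(_ _ _ _) E.
    have : (connected_component setT x `&` A) z.
      rewrite E //.
      - by exists x; split => //; exact: connected_component_refl.
      - by exists A.
      - by exists A.
    by case.
- move=> [cp cc] p clp.
  apply: contrapT => np.
  have nb : nbhs p (VV p.1 `*` ~` [set f p.1]).
    exists (VV p.1, ~` [set f p.1]) => //=; split.
      exact: VV_nbhs.
    apply: open_nbhs_nbhs; split; first by rewrite openC.
    by move=> /= e; apply: np; rewrite /graph /=.
  have [[a b] [/= gab [Va nb']]] := clp _ nb.
  apply: nb'; change (b = f a) in gab; change (b = f p.1); rewrite gab.
  apply: cc; rewrite (VV_comp _ _ Va); exact: connected_component_refl.
Qed.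

End Aux.
Arguments PP {X Y}.
Arguments cg_PP {X Y} _ f.
Arguments VV_comp {X x z}.
Arguments open_VV {X} _ {A} : rename.

Section Main.
Context (X Y : topologicalType) (alex : alexandroff X).

Let comp (x : X) := connected_component setT x.

Definition compT (x : X) : set_type (conn_components X) :=
  SigSub (mem_set (ex_intro2 (fun y => [set: X] y) (fun y => comp y = comp x) x I erefl)).

Definition rep (C : set_type (conn_components X)) : X :=
  projT1 (cid2 (set_mem (valP C))).

Lemma rep_comp C : comp (rep C) = val C.
Proof. by rewrite /rep; case: cid2 => /= r _ E; exact: E. Qed.

Lemma compT_rep C : compT (rep C) = C.
Proof. by apply: val_inj; rewrite /= rep_comp. Qed.

Lemma comp_rep_compT x : comp x (rep (compT x)).
Proof.
have := rep_comp (compT x); rewrite /= => E.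
rewrite -E; apply: connected_component_refl; done.
Qed.

Lemma compT_eq x z : comp x z -> compT x = compT z.
Proof.
move=> xz; apply: val_inj => /=.
exact: same_connected_component xz.
Qed.

Definition GG (g : set_type (conn_components X) -> set_type (closed_points Y)) :=
  fun x => val (g (compT x)).

Lemma GG_PP g : PP (GG g).
Proof.
split.
- move=> x; exact: (set_valP (g (compT x))).
- by move=> x z xz; rewrite /GG (compT_eq _ _ xz).
Qed.

Lemma GG_cont g : continuous (GG g).
Proof.
apply/continuousP => A oA; apply: open_VV => // w Aw u Vu.
rewrite /preimage /=; have -> : GG g u = GG g w; last exact: Aw.
apply: (GG_PP g).2; rewrite /comp (VV_comp Vu).
exact: connected_component_refl.
Qed.

Lemma GG_inj g g' : GG g = GG g' -> g = g'.
Proof.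
move=> E; apply: funext => C; apply: val_inj.
have := congr1 (fun h => h (rep C)) E; rewrite /GG compT_rep; done.
Qed.

End Main.
Arguments rep {X}.
Arguments compT {X}.
Arguments GG {X Y}.
Arguments GG_PP {X Y}.
Arguments GG_cont {X Y} _ g.
Arguments GG_inj {X Y g g'}.
Arguments comp_rep_compT {X}.
Arguments compT_rep {X}.

Theorem corollary3p6 (X Y : topologicalType) :
  alexandroff X ->
  ([set f : X -> Y | closed_graph f] #= comp_to_closed_pts X Y) /\
  (comp_to_closed_pts X Y #<= [set f : X -> Y | continuous f]).
Proof.
move=> alex; split.
- apply/card_bijP.
  pose F (f : set_type [set f : X -> Y | closed_graph f]) :
    set_type (comp_to_closed_pts X Y) :=
    SigSub (@mem_set _ setT
      (fun C => @SigSub _ _ (closed_points Y) (val f (rep C)) (@mem_set _ (closed_points Y) _ (((cg_PP alex (val f)).1 (set_mem (valP f))).1 (rep C)))) I).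
  pose G (g : set_type (comp_to_closed_pts X Y)) :
    set_type [set f : X -> Y | closed_graph f] :=
    SigSub (mem_set ((cg_PP alex (GG (val g))).2 (GG_PP (val g)))).
  exists F; exists G.
  + move=> f; apply: val_inj; apply: funext => x /=.
    rewrite /GG /=.
    have := (cg_PP alex (val f)).1 (set_mem (valP f)); case => _ cc.
    apply: cc; exact: comp_rep_compT.
  + move=> g; apply: val_inj; apply: funext => C /=; apply: val_inj => /=.
    by rewrite /GG compT_rep.
- apply/card_leP; apply/injfunPex.
  exists (fun g => SigSub (@mem_set _ [set f : X -> Y | continuous f] _ (GG_cont alex (val g)))).
    by [].
  move=> g g' _ _ /(congr1 val) /= E.
  by apply: val_inj; apply: GG_inj E.
Qed.
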